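(* Let $X,Y$ be real Banach spaces and let $H$ be a closed subspace of $L(X,Y)$ with $X^*\otimes Y\subseteq H$ such that $H$ has octahedral norm. Assume that the norm of $Y$ is non-rough. Then $X^*$ has octahedral norm.
   Context: The norm of a Banach space $Z$ is octahedral if for every finite-dimensional subspace $E$ and $\varepsilon>0$ there is $y\in S_Z$ with $\|x+\lambda y\|\ge(1-\varepsilon)(\|x\|+|\lambda|)$ for all $x\in E$, scalars $\lambda$. For $u\in S_Z$, $\eta(Z,u)=\limsup_{\|h\|\to0}\frac{\|u+h\|+\|u-h\|-2}{\|h\|}$. $Z$ is $\varepsilon$-rough if $\eta(Z,u)\ge\varepsilon$ for every $u\in S_Z$; the norm is rough if $\varepsilon$-rough for some $\varepsilon>0$, non-rough otherwise. $X^*\otimes Y$ is the space of finite-rank operators spanned by $x\mapsto x^*(x)y$. *)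

(* Defs.v *)
From Stdlib Require Import Reals List ClassicalEpsilon.
Open Scope R_scope.

Record Banach := {
  car :> Type;
  bzero : car;
  badd : car -> car -> car;
  bopp : car -> car;
  bscal : R -> car -> car;
  bnorm : car -> R;
  badd_assoc : forall x y z, badd x (badd y z) = badd (badd x y) z;
  badd_comm : forall x y, badd x y = badd y x;
  badd_zero : forall x, badd x bzero = x;
  badd_opp : forall x, badd x (bopp x) = bzero;
  bscal_one : forall x, bscal 1 x = x;
  bscal_assoc : forall a b x, bscal a (bscal b x) = bscal (a * b) x;
  bscal_addr : forall a x y, bscal a (badd x y) = badd (bscal a x) (bscal a y);
  bscal_addl : forall a b x, bscal (a + b) x = badd (bscal a x) (bscal b x);
  bnorm_eq0 : forall x, bnorm x = 0 -> x = bzero;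
  bnorm_scal : forall a x, bnorm (bscal a x) = Rabs a * bnorm x;
  bnorm_triangle : forall x y, bnorm (badd x y) <= bnorm x + bnorm y;
  bcomplete : forall u : nat -> car,
    (forall eps, 0 < eps -> exists N, forall n m, (N <= n)%nat -> (N <= m)%nat ->
        bnorm (badd (u n) (bopp (u m))) < eps) ->
    exists l, forall eps, 0 < eps -> exists N, forall n, (N <= n)%nat ->
        bnorm (badd (u n) (bopp l)) < eps
}.
Arguments bzero {_}. Arguments badd {_}. Arguments bopp {_}.
Arguments bscal {_}. Arguments bnorm {_}.

(** Supremum / infimum of a set of reals (meaningful when it exists). *)
Definition Rsup (E : R -> Prop) : R :=
  epsilon (inhabits 0) (fun r => is_lub E r).
Definition Rinf (E : R -> Prop) : R := - Rsup (fun x => E (- x)).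

Definition is_linear (X : Banach) {W : Type} (wadd : W -> W -> W)
  (wscal : R -> W -> W) (T : X -> W) : Prop :=
  (forall x y, T (badd x y) = wadd (T x) (T y)) /\
  (forall a x, T (bscal a x) = wscal a (T x)).

Definition is_bounded_linear (X : Banach) {W : Type} (wadd : W -> W -> W)
  (wscal : R -> W -> W) (wnorm : W -> R) (T : X -> W) : Prop :=
  is_linear X wadd wscal T /\
  exists C, forall x, wnorm (T x) <= C * bnorm x.

Definition opnorm (X : Banach) {W : Type} (wnorm : W -> R) (T : X -> W) : R :=
  Rsup (fun t => exists x : X, bnorm x <= 1 /\ t = wnorm (T x)).

Definition BL (X Y : Banach) (T : X -> Y) : Prop :=
  is_bounded_linear X (@badd Y) (@bscal Y) (@bnorm Y) T.
Definition op_add {X Y : Banach} (S T : X -> Y) : X -> Y := fun x => badd (S x) (T x).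
Definition op_scal {X Y : Banach} (a : R) (T : X -> Y) : X -> Y := fun x => bscal a (T x).
Definition op_zero {X Y : Banach} : X -> Y := fun _ => bzero.
Definition op_norm {X Y : Banach} (T : X -> Y) : R := opnorm X (@bnorm Y) T.

Definition dual_mem (X : Banach) (f : X -> R) : Prop :=
  is_bounded_linear X Rplus Rmult Rabs f.
Definition fadd {X : Banach} (f g : X -> R) : X -> R := fun x => f x + g x.
Definition fscal {X : Banach} (a : R) (f : X -> R) : X -> R := fun x => a * f x.
Definition fzero {X : Banach} : X -> R := fun _ => 0.
Definition fnorm {X : Banach} (f : X -> R) : R := opnorm X Rabs f.

Definition closed_subspace_L (X Y : Banach) (H : (X -> Y) -> Prop) : Prop :=
  (forall T, H T -> BL X Y T) /\
  H op_zero /\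
  (forall S T, H S -> H T -> H (op_add S T)) /\
  (forall a T, H T -> H (op_scal a T)) /\
  (forall (u : nat -> X -> Y) (T : X -> Y), (forall n, H (u n)) -> BL X Y T ->
     (forall eps, 0 < eps -> exists N, forall n, (N <= n)%nat ->
        op_norm (op_add (u n) (op_scal (-1) T)) < eps) ->
     H T).

(** X^* (x) Y: finite sums of rank-one operators x |-> f(x) y. *)
Definition tensor_op {X Y : Banach} (l : list ((X -> R) * Y)) : X -> Y :=
  fun x => fold_right (fun p acc => badd (bscal (fst p x) (snd p)) acc) bzero l.

Definition tensor_in (X Y : Banach) (H : (X -> Y) -> Prop) : Prop :=
  forall l : list ((X -> R) * Y),
    Forall (fun p => dual_mem X (fst p)) l -> H (tensor_op l).

(** Octahedral norm of a normed space V (carrier restricted to the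
    subspace P), given by its operations.  A finite-dimensional subspace E
    of the space is the span of a finite list of its elements. *)
Definition lincomb {V : Type} (vadd : V -> V -> V) (vscal : R -> V -> V) (vzero : V)
  (c : list R) (l : list V) : V :=
  fold_right (fun p acc => vadd (vscal (fst p) (snd p)) acc) vzero (combine c l).

Definition octahedral {V : Type} (P : V -> Prop) (vadd : V -> V -> V)
  (vscal : R -> V -> V) (vzero : V) (vnorm : V -> R) : Prop :=
  forall (l : list V), Forall P l ->
  forall eps, 0 < eps ->
  exists y, P y /\ vnorm y = 1 /\
    forall (c : list R) (lam : R), length c = length l ->
      let x := lincomb vadd vscal vzero c l in
      vnorm (vadd x (vscal lam y)) >= (1 - eps) * (vnorm x + Rabs lam).

(** eta(Z,u) = limsup_{||h|| -> 0} (||u+h|| + ||u-h|| - 2) / ||h||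
           = inf_{delta>0} sup_{0<||h||<delta} (...). *)
Definition eta (Z : Banach) (u : Z) : R :=
  Rinf (fun s => exists delta, 0 < delta /\
    s = Rsup (fun t => exists h : Z, 0 < bnorm h < delta /\
      t = (bnorm (badd u h) + bnorm (badd u (bopp h)) - 2) / bnorm h)).

Definition eps_rough (Z : Banach) (e : R) : Prop :=
  forall u : Z, bnorm u = 1 -> eta Z u >= e.

Definition rough (Z : Banach) : Prop := exists e, 0 < e /\ eps_rough Z e.
Definition non_rough (Z : Banach) : Prop := ~ rough Z.

(* Main.v *)
Require Import Defs.
From Stdlib Require Import Reals List Lra ClassicalEpsilon Classical FunctionalExtensionality PropExtensionality.
From mathcomp Require classical_sets boolp.
Open Scope R_scope.

Arguments badd_assoc {_}. Arguments badd_comm {_}. Arguments badd_zero {_}. Arguments badd_opp {_}. Arguments bscal_one {_}. Arguments bscal_assoc {_}. Arguments bscal_addr {_}. Arguments bscal_addl {_}. Arguments bnorm_eq0 {_}. Arguments bnorm_scal {_}. Arguments bnorm_triangle {_}.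
Section Vec.
Variable V : Banach.
Implicit Types x y z : V.

Lemma add0l x : badd bzero x = x.
Proof. rewrite badd_comm. apply badd_zero. Qed.

Lemma add_cancel x y z : badd x y = badd x z -> y = z.
Proof.
  intros E. assert (E2: badd (bopp x) (badd x y) = badd (bopp x) (badd x z)) by (rewrite E; reflexivity).
  rewrite !badd_assoc in E2. rewrite (badd_comm (bopp x) x), badd_opp, !add0l in E2. exact E2.
Qed.

Lemma scal0 x : bscal 0 x = bzero.
Proof.
  apply (add_cancel (bscal 0 x)). rewrite badd_zero, <- bscal_addl. f_equal. ring.
Qed.

Lemma scalv0 a : bscal a (@bzero V) = bzero.
Proof. rewrite <- (scal0 bzero), bscal_assoc. f_equal; ring. Qed.

Lemma opp_scal x : bopp x = bscal (-1) x.
Proof.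
  apply (add_cancel x). rewrite badd_opp. rewrite <- (bscal_one x) at 1.
  rewrite <- bscal_addl. replace (1 + -1) with 0 by ring. now rewrite scal0.
Qed.

Lemma norm0 : bnorm (@bzero V) = 0.
Proof. rewrite <- (scal0 bzero), bnorm_scal, Rabs_R0. ring. Qed.

Lemma norm_opp x : bnorm (bopp x) = bnorm x.
Proof. rewrite opp_scal, bnorm_scal. replace (Rabs (-1)) with 1. ring. rewrite Rabs_left; lra. Qed.

Lemma norm_ge0 x : 0 <= bnorm x.
Proof.
  pose proof (bnorm_triangle x (bopp x)). rewrite badd_opp, norm0, norm_opp in H. lra.
Qed.

Lemma norm_rev x y : bnorm x - bnorm y <= bnorm (badd x y).
Proof.
  pose proof (bnorm_triangle (badd x y) (bopp y)).
  rewrite <- badd_assoc, badd_opp, badd_zero, norm_opp in H. lra.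
Qed.

Lemma scal_add_same a b x : badd (bscal a x) (bscal b x) = bscal (a+b) x.
Proof. now rewrite bscal_addl. Qed.

Lemma add_swap4 x y z w : badd (badd x y) (badd z w) = badd (badd x z) (badd y w).
Proof.
  rewrite <- !badd_assoc. f_equal. rewrite !badd_assoc. f_equal. apply badd_comm.
Qed.

End Vec.

Lemma Rsup_spec (E : R -> Prop) : (exists x, E x) -> (exists M, forall x, E x -> x <= M) ->
  is_lub E (Rsup E).
Proof.
  intros [x Ex] [M HM]. unfold Rsup. apply epsilon_spec.
  destruct (completeness E) as [m Hm]. exists M; exact HM. exists x; exact Ex. exists m; exact Hm.
Qed.

Lemma Rsup_ub (E : R -> Prop) x : (exists M, forall x, E x -> x <= M) -> E x -> x <= Rsup E.
Proof. intros HB Ex. destruct (Rsup_spec E (ex_intro _ x Ex) HB) as [H1 _]. apply H1, Ex. Qed.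

Lemma Rsup_le (E : R -> Prop) M : (exists x, E x) -> (forall x, E x -> x <= M) -> Rsup E <= M.
Proof. intros Hne HM. destruct (Rsup_spec E Hne (ex_intro _ M HM)) as [_ H2]. apply H2. exact HM. Qed.

Lemma Rsup_approx (E : R -> Prop) eta : (exists x, E x) -> (exists M, forall x, E x -> x <= M) ->
  0 < eta -> exists x, E x /\ Rsup E - eta < x.
Proof.
  intros Hne HB He. apply NNPP. intros Hn.
  assert (Rsup E <= Rsup E - eta).
  { apply Rsup_le; auto. intros x Ex. apply Rnot_lt_le. intros Hl. apply Hn. exists x; auto. }
  lra.
Qed.

Lemma Rinf_lb (E : R -> Prop) x : (exists m, forall x, E x -> m <= x) -> E x -> Rinf E <= x.
Proof.
  intros [m Hm] Ex. unfold Rinf. assert (-x <= Rsup (fun y => E (- y))).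
  { apply Rsup_ub. exists (-m). intros y Ey. specialize (Hm _ Ey). lra. rewrite Ropp_involutive. exact Ex. }
  lra.
Qed.

Lemma Rinf_ge (E : R -> Prop) m : (exists x, E x) -> (forall x, E x -> m <= x) -> m <= Rinf E.
Proof.
  intros [x Ex] Hm. unfold Rinf. assert (Rsup (fun y => E (- y)) <= -m).
  { apply Rsup_le. exists (-x). rewrite Ropp_involutive; exact Ex. intros y Ey. specialize (Hm _ Ey). lra. }
  lra.
Qed.

Lemma Rinf_approx (E : R -> Prop) eta : (exists x, E x) -> (exists m, forall x, E x -> m <= x) ->
  0 < eta -> exists x, E x /\ x < Rinf E + eta.
Proof.
  intros Hne HB He. apply NNPP. intros Hn.
  assert (Rinf E + eta <= Rinf E).
  { apply Rinf_ge; auto. intros x Ex. apply Rnot_lt_le. intros Hl. apply Hn. exists x; auto. }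
  lra.
Qed.

Section OpNorm.
Variables (X : Banach) (W : Type) (wnorm : W -> R) (T : X -> W).

Definition obdd := exists M, forall x : X, bnorm x <= 1 -> wnorm (T x) <= M.

Lemma opnorm_ne : exists t, (fun t => exists x : X, bnorm x <= 1 /\ t = wnorm (T x)) t.
Proof. exists (wnorm (T bzero)). exists bzero. split; auto. rewrite norm0; lra. Qed.

Lemma opnorm_ub x : obdd -> bnorm x <= 1 -> wnorm (T x) <= opnorm X wnorm T.
Proof.
  intros [M HM] Hx. apply Rsup_ub. exists M. intros t [y [Hy ->]]. auto. exists x; auto.
Qed.

Lemma opnorm_le M : (forall x : X, bnorm x <= 1 -> wnorm (T x) <= M) -> opnorm X wnorm T <= M.
Proof. intros HM. apply Rsup_le. apply opnorm_ne. intros t [y [Hy ->]]. auto. Qed.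

Lemma opnorm_approx eta : obdd -> 0 < eta ->
  exists x, bnorm x <= 1 /\ opnorm X wnorm T - eta < wnorm (T x).
Proof.
  intros [M HM] He. destruct (Rsup_approx _ eta opnorm_ne) as [t [[x [Hx ->]] Ht]]; auto.
  exists M. intros t [y [Hy ->]]; auto. exists x; auto.
Qed.
End OpNorm.

Lemma le_eps a b : (forall eta, 0 < eta -> a <= b + eta) -> a <= b.
Proof.
  intros H. apply Rnot_lt_le. intros Hl. specialize (H ((a - b)/2) ltac:(lra)). lra.
Qed.

Section HB.
Variable Y : Banach.

Definition sublin (q : Y -> R) :=
  (forall x y, q (badd x y) <= q x + q y) /\
  (forall a x, 0 < a -> q (bscal a x) <= a * q x) /\ q bzero = 0.

Lemma sublin_homog q a x : sublin q -> 0 <= a -> q (bscal a x) = a * q x.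
Proof.
  intros [Ha [Hs H0]] Hpos. destruct (Req_dec a 0) as [->|Hn].
  - rewrite scal0, H0. ring.
  - apply Rle_antisym. apply Hs. lra.
    assert (q x <= / a * q (bscal a x)).
    { rewrite <- (bscal_one x) at 1. replace 1 with (/a * a) by (field; auto).
      rewrite <- bscal_assoc. apply Hs. apply Rinv_0_lt_compat; lra. }
    apply (Rmult_le_compat_l a) in H; [|lra]. rewrite <- Rmult_assoc, Rinv_r in H; lra.
Qed.

Lemma sublin_lower q x : sublin q -> - q (bopp x) <= q x.
Proof.
  intros Hq. destruct Hq as [Ha [_ H0]]. pose proof (Ha x (bopp x)). rewrite badd_opp, H0 in H. lra.
Qed.

Definition shift (q : Y -> R) (x0 : Y) (y : Y) : R :=
  Rinf (fun r => exists t, 0 <= t /\ r = q (badd y (bscal t x0)) - t * q x0).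

Section Shift.
Variables (q : Y -> R) (x0 : Y).
Hypothesis Hq : sublin q.

Lemma shift_lbset y : exists m, forall r, (exists t, 0 <= t /\ r = q (badd y (bscal t x0)) - t * q x0) -> m <= r.
Proof.
  exists (- q (bopp y)). intros r [t [Ht ->]].
  destruct Hq as [Ha _].
  pose proof (Ha (badd y (bscal t x0)) (bopp y)).
  rewrite (badd_comm y), <- badd_assoc, badd_opp, badd_zero in H.
  rewrite (sublin_homog q t x0 Hq Ht) in H. rewrite (badd_comm (bscal t x0) y) in H. lra.
Qed.

Lemma shift_ne y : exists r, (exists t, 0 <= t /\ r = q (badd y (bscal t x0)) - t * q x0).
Proof. exists (q (badd y (bscal 0 x0)) - 0 * q x0). exists 0. split. apply Rle_refl. reflexivity. Qed.

Lemma shift_le_val y t : 0 <= t -> shift q x0 y <= q (badd y (bscal t x0)) - t * q x0.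
Proof. intros Ht. apply Rinf_lb. apply shift_lbset. exists t; auto. Qed.

Lemma shift_le y : shift q x0 y <= q y.
Proof. pose proof (shift_le_val y 0 (Rle_refl 0)). rewrite scal0, badd_zero in H. lra. Qed.

Lemma shift_ge y : - q (bopp y) <= shift q x0 y.
Proof.
  apply Rinf_ge. apply shift_ne. intros r Hr. destruct (shift_lbset y) as [m Hm].
  destruct Hr as [t [Ht ->]]. destruct Hq as [Ha _].
  pose proof (Ha (badd y (bscal t x0)) (bopp y)).
  rewrite (badd_comm y), <- badd_assoc, badd_opp, badd_zero in H.
  rewrite (sublin_homog q t x0 Hq Ht) in H. rewrite (badd_comm (bscal t x0) y) in H. lra.
Qed.

Lemma shift_approx y eta : 0 < eta -> exists t, 0 <= t /\ q (badd y (bscal t x0)) - t * q x0 < shift q x0 y + eta.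
Proof.
  intros He. destruct (Rinf_approx _ eta (shift_ne y) (shift_lbset y) He) as [r [[t [Ht ->]] Hr]].
  exists t; auto.
Qed.

Lemma shift_sublin : sublin (shift q x0).
Proof.
  pose proof Hq as [Ha [Hs H0]].
  split; [|split].
  - intros y z. apply le_eps. intros eta He.
    destruct (shift_approx y (eta/2)) as [t1 [Ht1 H1]]; [lra|].
    destruct (shift_approx z (eta/2)) as [t2 [Ht2 H2]]; [lra|].
    pose proof (shift_le_val (badd y z) (t1 + t2) ltac:(lra)).
    pose proof (Ha (badd y (bscal t1 x0)) (badd z (bscal t2 x0))).
    rewrite add_swap4, scal_add_same in H3. lra.
  - intros a y Hpos. apply le_eps. intros eta He.
    destruct (shift_approx y (eta/a)) as [t [Ht H1]].
    { apply Rdiv_lt_0_compat; lra. }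
    pose proof (shift_le_val (bscal a y) (a*t) ltac:(nra)).
    rewrite <- bscal_assoc, <- bscal_addr in H.
    rewrite (sublin_homog q a _ Hq ltac:(lra)) in H.
    assert (a * (q (badd y (bscal t x0)) - t * q x0) <= a * (shift q x0 y + eta / a)).
    { apply Rmult_le_compat_l; lra. }
    replace (a * (shift q x0 y + eta / a)) with (a * shift q x0 y + eta) in H2 by (field; lra).
    lra.
  - apply Rle_antisym. pose proof (shift_le bzero). lra.
    pose proof (shift_ge bzero). rewrite opp_scal, scalv0, H0 in H. lra.
Qed.

Lemma shift_opp : shift q x0 (bopp x0) <= - q x0.
Proof.
  pose proof (shift_le_val (bopp x0) 1 ltac:(lra)).
  rewrite bscal_one, badd_comm, badd_opp in H. destruct Hq as [_ [_ H0]]. lra.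
Qed.
End Shift.

Variable u : Y.
Hypothesis Hu : bnorm u = 1.

Definition fam (q : Y -> R) := sublin q /\ (forall y, q y <= bnorm y) /\ q (bopp u) <= -1.

Lemma norm_sublin : sublin (@bnorm Y).
Proof.
  split; [|split]. apply bnorm_triangle. intros a x Ha. rewrite bnorm_scal, Rabs_pos_eq; lra.
  apply norm0.
Qed.

Lemma fam0 : fam (shift (@bnorm Y) u).
Proof.
  split; [|split]. apply shift_sublin, norm_sublin.
  intros y. apply shift_le, norm_sublin.
  pose proof (shift_opp (@bnorm Y) u norm_sublin). lra.
Qed.

Definition FT := {q : Y -> R | fam q}.
Definition FR (a b : FT) : bool := boolp.asbool (forall y, proj1_sig b y <= proj1_sig a y).

Lemma chain_lb (A : FT -> Prop) : classical_sets.total_on A (fun a b => is_true (FR a b)) ->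
  exists t, forall s, A s -> is_true (FR s t).
Proof.
  intros Htot.
  destruct (classic (exists s, A s)) as [[s0 As0]|Hn].
  2:{ exists (exist _ _ fam0). intros s As. exfalso. apply Hn. exists s; auto. }
  set (m := fun y => Rinf (fun r => exists s, A s /\ r = proj1_sig s y)).
  assert (Hne : forall y, exists r, (fun r => exists s, A s /\ r = proj1_sig s y) r).
  { intros y. eexists. exists s0. split; eauto. }
  assert (Hlb : forall y, exists mm, forall r, (fun r => exists s, A s /\ r = proj1_sig s y) r -> mm <= r).
  { intros y. exists (- bnorm (bopp y)). intros r [s [As ->]]. destruct s as [q [Hqs [Hqp Hqu]]]. simpl.
    pose proof (sublin_lower _ y Hqs). pose proof (Hqp (bopp y)). lra. }
  assert (Hmle : forall s y, A s -> m y <= proj1_sig s y).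
  { intros s y As. apply Rinf_lb. apply Hlb. exists s; auto. }
  assert (Happ : forall y eta, 0 < eta -> exists s, A s /\ proj1_sig s y < m y + eta).
  { intros y eta He. destruct (Rinf_approx _ eta (Hne y) (Hlb y) He) as [r [[s [As ->]] Hr]]. exists s; auto. }
  assert (Hfam : fam m).
  { split; [split; [|split]|split].
    - intros y z. apply le_eps. intros eta He.
      destruct (Happ y (eta/2)) as [s1 [As1 H1]]; [lra|].
      destruct (Happ z (eta/2)) as [s2 [As2 H2]]; [lra|].
      destruct (Htot s1 s2 As1 As2) as [R12|R21].
      + apply boolp.asboolW in R12.
        pose proof (Hmle s2 (badd y z) As2).
        destruct (proj2_sig s2) as [[Ha2 _] _].
        pose proof (Ha2 y z). pose proof (R12 y). lra.
      + apply boolp.asboolW in R21.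
        pose proof (Hmle s1 (badd y z) As1).
        destruct (proj2_sig s1) as [[Ha1 _] _].
        pose proof (Ha1 y z). pose proof (R21 z). lra.
    - intros a y Ha. apply le_eps. intros eta He.
      destruct (Happ y (eta/a)) as [s [As H1]]. apply Rdiv_lt_0_compat; lra.
      pose proof (Hmle s (bscal a y) As).
      destruct (proj2_sig s) as [[_ [Hs _]] _].
      pose proof (Hs a y Ha).
      assert (a * proj1_sig s y <= a * (m y + eta / a)) by (apply Rmult_le_compat_l; lra).
      replace (a * (m y + eta / a)) with (a * m y + eta) in H2 by (field; lra). lra.
    - apply Rle_antisym.
      + pose proof (Hmle s0 bzero As0). destruct (proj2_sig s0) as [[_ [_ H0]] _]. lra.
      + apply Rinf_ge. apply Hne. intros r [s [As ->]]. destruct (proj2_sig s) as [[_ [_ H0]] _]. lra.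
    - intros y. pose proof (Hmle s0 y As0). destruct (proj2_sig s0) as [_ [Hp _]]. pose proof (Hp y). lra.
    - pose proof (Hmle s0 (bopp u) As0). destruct (proj2_sig s0) as [_ [_ Hp]]. lra. }
  exists (exist _ m Hfam). intros s As. apply boolp.asboolT. simpl. intros y. apply Hmle; auto.
Qed.

Lemma HB_exists : exists phi : Y -> R,
  (forall x y, phi (badd x y) = phi x + phi y) /\
  (forall a x, phi (bscal a x) = a * phi x) /\
  (forall y, Rabs (phi y) <= bnorm y) /\ phi u = 1.
Proof.
  destruct (@classical_sets.ZL_preorder FT (exist _ _ fam0) FR) as [[q [Hqs [Hqp Hqu]]] Hmax].
  - intros t. apply boolp.asboolT. intros; lra.
  - intros r s t H1 H2. apply boolp.asboolT. apply boolp.asboolW in H1. apply boolp.asboolW in H2.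
    intros y. specialize (H1 y). specialize (H2 y). lra.
  - apply chain_lb.
  - assert (Hodd : forall x0, q (bopp x0) = - q x0).
    { intros x0.
      assert (Hf : fam (shift q x0)).
      { split; [|split]. apply shift_sublin; auto. intros y. pose proof (shift_le q x0 Hqs y). pose proof (Hqp y). lra.
        pose proof (shift_le q x0 Hqs (bopp u)). lra. }
      specialize (Hmax (exist _ _ Hf)). simpl in Hmax.
      assert (is_true (FR (exist _ q (conj Hqs (conj Hqp Hqu))) (exist _ _ Hf))).
      { apply boolp.asboolT. simpl. intros y. apply shift_le; auto. }
      specialize (Hmax H). apply boolp.asboolW in Hmax. simpl in Hmax.
      pose proof (Hmax (bopp x0)). pose proof (shift_opp q x0 Hqs).
      pose proof (sublin_lower q x0 Hqs). lra. }
    assert (Hadd : forall x y, q (badd x y) = q x + q y).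
    { intros x y. pose proof Hqs as [Ha _]. apply Rle_antisym. apply Ha.
      pose proof (Ha (bopp x) (bopp y)). 
      assert (badd (bopp x) (bopp y) = bopp (badd x y)).
      { rewrite !opp_scal, bscal_addr. reflexivity. }
      rewrite H0, !Hodd in H. lra. }
    assert (Hsc : forall a x, q (bscal a x) = a * q x).
    { intros a x. destruct (Rle_dec 0 a). apply sublin_homog; auto.
      replace (bscal a x) with (bscal (-a) (bopp x)).
      rewrite sublin_homog; auto; [|lra]. rewrite Hodd. ring.
      rewrite opp_scal, bscal_assoc. f_equal. ring. }
    exists q. split; [|split; [|split]]; auto.
    + intros y. apply Rabs_le. pose proof (Hqp y). pose proof (Hqp (bopp y)). rewrite Hodd, norm_opp in H0. lra.
    + pose proof (Hqp u). pose proof Hqu as Hqu2. rewrite Hodd in Hqu2. lra.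
Qed.
End HB.

Lemma Rabs_m1 : Rabs (-1) = 1.
Proof. unfold Rabs. destruct (Rcase_abs (-1)); lra. Qed.

Section FN.
Variable X : Banach.
Definition fbdd (f : X -> R) := obdd X R Rabs f.

Lemma bound_ball (C : R) (x : X) : bnorm x <= 1 -> C * bnorm x <= Rabs C.
Proof.
  intros Hx. pose proof (norm_ge0 X x). destruct (Rle_dec 0 C).
  rewrite Rabs_pos_eq; auto. nra. rewrite Rabs_left; nra.
Qed.

Lemma dual_fbdd f : dual_mem X f -> fbdd f.
Proof.
  intros [_ [C HC]]. exists (Rabs C). intros x Hx. eapply Rle_trans. apply HC. apply bound_ball; auto.
Qed.

Lemma fnorm_ub f x : fbdd f -> bnorm x <= 1 -> Rabs (f x) <= fnorm f.
Proof. intros Hb Hx. unfold fnorm. apply (opnorm_ub X R Rabs f x Hb Hx). Qed.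

Lemma fnorm_le f M : (forall x : X, bnorm x <= 1 -> Rabs (f x) <= M) -> fnorm f <= M.
Proof. intros H. unfold fnorm. apply (opnorm_le X R Rabs f M H). Qed.

Lemma fnorm_ge0 f : fbdd f -> 0 <= fnorm f.
Proof. intros Hb. eapply Rle_trans. apply Rabs_pos. apply (fnorm_ub f bzero Hb). rewrite norm0; lra. Qed.

Lemma fbdd_add f g : fbdd f -> fbdd g -> fbdd (fadd f g).
Proof.
  intros [M1 H1] [M2 H2]. exists (M1 + M2). intros x Hx. unfold fadd.
  eapply Rle_trans. apply Rabs_triang. pose proof (H1 x Hx). pose proof (H2 x Hx). lra.
Qed.

Lemma fbdd_scal a f : fbdd f -> fbdd (fscal a f).
Proof.
  intros [M1 H1]. exists (Rabs a * M1). intros x Hx. unfold fscal. rewrite Rabs_mult.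
  apply Rmult_le_compat_l. apply Rabs_pos. auto.
Qed.

Lemma fnorm_add f g : fbdd f -> fbdd g -> fnorm (fadd f g) <= fnorm f + fnorm g.
Proof.
  intros Hf Hg. apply fnorm_le. intros x Hx. unfold fadd. eapply Rle_trans. apply Rabs_triang.
  pose proof (fnorm_ub f x Hf Hx). pose proof (fnorm_ub g x Hg Hx). lra.
Qed.

Lemma fnorm_scal a f : fbdd f -> fnorm (fscal a f) <= Rabs a * fnorm f.
Proof.
  intros Hf. apply fnorm_le. intros x Hx. unfold fscal. rewrite Rabs_mult.
  apply Rmult_le_compat_l. apply Rabs_pos. apply fnorm_ub; auto.
Qed.

Lemma fnorm_opp f : fbdd f -> fnorm (fscal (-1) f) = fnorm f.
Proof.
  intros Hf. apply Rle_antisym. pose proof (fnorm_scal (-1) f Hf). rewrite Rabs_m1 in H. lra.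
  assert (f = fscal (-1) (fscal (-1) f)). { apply functional_extensionality. intros x. unfold fscal. ring. }
  pose proof (fnorm_scal (-1) (fscal (-1) f) (fbdd_scal _ _ Hf)). rewrite <- H in H0.
  rewrite Rabs_m1 in H0. lra.
Qed.

Lemma conv_step (F G : X -> R) N t0 e lam : fbdd F -> fbdd G -> fnorm G = 1 -> N = fnorm F ->
  0 < t0 <= 1 -> 0 < N -> 0 <= e ->
  fnorm (fadd F (fscal (t0 * N) G)) >= N + t0 * N - t0 * N * e -> 0 <= lam ->
  fnorm (fadd F (fscal lam G)) >= (1 - e) * (N + lam).
Proof.
  intros HF HG HG1 HN Ht0 HNp He Hk Hl.
  set (l0 := t0 * N) in *.
  assert (Hl0 : 0 < l0) by (unfold l0; nra).
  destruct (Rle_dec l0 lam) as [Hle|Hlt].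
  - set (al := l0 / lam).
    assert (Hlam : 0 < lam) by lra.
    assert (Hal : 0 < al <= 1).
    { unfold al. split. apply Rdiv_lt_0_compat; lra. apply Rmult_le_reg_r with lam; auto.
      unfold Rdiv. rewrite Rmult_assoc, Rinv_l; lra. }
    assert (E : fadd F (fscal l0 G) = fadd (fscal (1 - al) F) (fscal al (fadd F (fscal lam G)))).
    { apply functional_extensionality. intros x. unfold fadd, fscal, al. field. lra. }
    pose proof (fnorm_add (fscal (1 - al) F) (fscal al (fadd F (fscal lam G)))
       (fbdd_scal _ _ HF) (fbdd_scal _ _ (fbdd_add _ _ HF (fbdd_scal _ _ HG)))).
    rewrite <- E in H.
    pose proof (fnorm_scal (1 - al) F HF). pose proof (fnorm_scal al _ (fbdd_add _ _ HF (fbdd_scal lam _ HG))).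
    rewrite Rabs_pos_eq in H0 by lra. rewrite Rabs_pos_eq in H1 by lra.
    set (Z := fnorm (fadd F (fscal lam G))) in *.
    assert (al * Z >= al * (N + lam - lam * e)).
    { replace (al * (N + lam - lam * e)) with (al * N + l0 - l0 * e).
      rewrite <- HN in H0. nra. unfold al. field. lra. }
    assert (Z >= N + lam - lam * e) by nra. nra.
  - assert (E : fadd F (fscal l0 G) = fadd (fadd F (fscal lam G)) (fscal (l0 - lam) G)).
    { apply functional_extensionality. intros x. unfold fadd, fscal. ring. }
    pose proof (fnorm_add (fadd F (fscal lam G)) (fscal (l0 - lam) G)
      (fbdd_add _ _ HF (fbdd_scal _ _ HG)) (fbdd_scal _ _ HG)).
    rewrite <- E in H. pose proof (fnorm_scal (l0 - lam) G HG). rewrite Rabs_pos_eq in H0 by lra.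
    rewrite HG1 in H0. assert (l0 * e <= N * e) by (unfold l0; apply Rmult_le_compat_r; [lra|]; rewrite <- (Rmult_1_l N) at 2; apply Rmult_le_compat_r; lra). assert (0 <= e * lam) by (apply Rmult_le_pos; lra). lra.
Qed.
End FN.

Lemma Rabs_le_bt x y : Rabs x <= y -> -y <= x <= y.
Proof. unfold Rabs. destruct (Rcase_abs x); lra. Qed.

Section Smooth.
Variable Y : Banach.

Definition qf (u h : Y) := (bnorm (badd u h) + bnorm (badd u (bopp h)) - 2) / bnorm h.

Lemma qf_bounds u h : bnorm u = 1 -> 0 < bnorm h -> 0 <= qf u h <= 2.
Proof.
  intros Hu Hh. unfold qf.
  pose proof (bnorm_triangle u h). pose proof (bnorm_triangle u (bopp h)). rewrite norm_opp in H0.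
  pose proof (bnorm_triangle (badd u h) (badd u (bopp h))).
  assert (badd (badd u h) (badd u (bopp h)) = bscal 2 u).
  { rewrite add_swap4, badd_opp, badd_zero. rewrite <- (bscal_one u) at 1 2. rewrite scal_add_same. f_equal; try ring. }
  rewrite H2, bnorm_scal, Hu, Rabs_pos_eq in H1 by lra.
  split. apply Rmult_le_pos. lra. left. apply Rinv_0_lt_compat; auto.
  apply Rmult_le_reg_r with (bnorm h); auto. unfold Rdiv. rewrite Rmult_assoc, Rinv_l; lra.
Qed.

Lemma smooth_point : non_rough Y -> forall d1, 0 < d1 -> exists u : Y, bnorm u = 1 /\
  exists delta0, 0 < delta0 /\ forall h, 0 < bnorm h < delta0 ->
    bnorm (badd u h) + bnorm (badd u (bopp h)) - 2 <= d1 * bnorm h.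
Proof.
  intros Hnr d1 Hd1.
  assert (exists u : Y, bnorm u = 1 /\ eta Y u < d1).
  { apply NNPP. intros Hn. apply Hnr. exists d1. split; auto. intros u Hu.
    apply Rnot_lt_ge. intros Hl. apply Hn. exists u; auto. }
  destruct H as [u [Hu Heta]]. exists u. split; auto.
  set (I := fun delta t => exists h : Y, 0 < bnorm h < delta /\ t = qf u h).
  assert (Ine : forall delta, 0 < delta -> exists t, I delta t).
  { intros delta Hd. exists (qf u (bscal (delta/2) u)). exists (bscal (delta/2) u). split; auto.
    rewrite bnorm_scal, Hu, Rabs_pos_eq; lra. }
  assert (Ib : forall delta, exists M, forall t, I delta t -> t <= M).
  { intros delta. exists 2. intros t [h [Hh ->]]. pose proof (qf_bounds u h Hu (proj1 Hh)); lra. }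
  set (E := fun s => exists delta, 0 < delta /\ s = Rsup (fun t => exists h : Y, 0 < bnorm h < delta /\ t = qf u h)).
  assert (Heq : eta Y u = Rinf E) by reflexivity. rewrite Heq in Heta.
  assert (Ene : exists s, E s).
  { eexists. exists 1. split. lra. reflexivity. }
  assert (Elb : exists m, forall s, E s -> m <= s).
  { exists 0. intros s [delta [Hd ->]]. destruct (Ine delta Hd) as [t Ht].
    eapply Rle_trans. 2: apply (Rsup_ub _ t (Ib delta) Ht).
    destruct Ht as [h [Hh ->]]. pose proof (qf_bounds u h Hu (proj1 Hh)); lra. }
  destruct (Rinf_approx E (d1 - Rinf E) Ene Elb ltac:(lra)) as [s [[delta [Hd ->]] Hs]].
  exists delta. split; auto. intros h Hh.
  assert (qf u h <= d1).
  { eapply Rle_trans. apply (Rsup_ub _ _ (Ib delta)). exists h; split; auto. unfold I. lra. }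
  unfold qf in H. apply Rmult_le_compat_r with (r := bnorm h) in H; [|lra].
  unfold Rdiv in H. rewrite Rmult_assoc, Rinv_l in H; lra.
Qed.

Variables (u : Y) (phi : Y -> R) (d1 delta0 : R).
Hypothesis Hphiadd : forall x y, phi (badd x y) = phi x + phi y.
Hypothesis Hphisc : forall a x, phi (bscal a x) = a * phi x.
Hypothesis Hphin : forall y, Rabs (phi y) <= bnorm y.
Hypothesis Hphiu : phi u = 1.
Hypothesis Hu : bnorm u = 1.
Hypothesis Hd1 : 0 <= d1.
Hypothesis Hsm : forall h, 0 < bnorm h < delta0 ->
    bnorm (badd u h) + bnorm (badd u (bopp h)) - 2 <= d1 * bnorm h.

Lemma smooth_est a lam v : 0 < a -> 0 <= lam -> lam / a < delta0 -> bnorm v <= 1 ->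
  a + lam * phi v >= bnorm (badd (bscal a u) (bscal lam v)) - lam * d1.
Proof.
  intros Ha Hl Hs Hv.
  set (s := lam / a).
  assert (Hs0 : 0 <= s) by (unfold s; apply Rmult_le_pos; [lra| left; apply Rinv_0_lt_compat; lra]).
  assert (Elam : lam = a * s) by (unfold s; field; lra).
  set (h := bscal s v).
  assert (E : badd (bscal a u) (bscal lam v) = bscal a (badd u h)).
  { unfold h. rewrite bscal_addr, bscal_assoc, <- Elam. reflexivity. }
  rewrite E, bnorm_scal, Rabs_pos_eq by lra.
  assert (Hph : phi h = s * phi v) by (unfold h; apply Hphisc).
  assert (Hhn : bnorm h = s * bnorm v) by (unfold h; rewrite bnorm_scal, Rabs_pos_eq; lra).
  pose proof (norm_ge0 Y v).
  assert (bnorm (badd u h) <= 1 + phi h + d1 * s).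
  { destruct (Req_dec (bnorm h) 0) as [H0|H0].
    - apply bnorm_eq0 in H0. rewrite H0, badd_zero, Hu. rewrite H0 in Hph.
      assert (phi bzero = 0). { rewrite <- (scal0 Y bzero), Hphisc. ring. }
      rewrite H1. nra.
    - assert (0 < bnorm h) by (pose proof (norm_ge0 Y h); lra).
      assert (bnorm h <= s) by nra.
      assert (Hlt : bnorm h < delta0) by (unfold s in H2; lra). specialize (Hsm h (conj H1 Hlt)).
      pose proof (Hphin (badd u (bopp h))). rewrite Hphiadd, opp_scal, Hphisc, Hphiu in H3.
      rewrite <- opp_scal in H3.
      apply Rabs_le_bt in H3. assert (d1 * bnorm h <= d1 * s) by (apply Rmult_le_compat_l; lra). lra. }
  rewrite Hph in H0. rewrite Elam. nra.
Qed.
End Smooth.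

Section Aux.
Variables X Y : Banach.

Lemma dual_zero : dual_mem X fzero.
Proof.
  split. split; intros; unfold fzero; ring. exists 0. intros x. unfold fzero. rewrite Rabs_R0. lra.
Qed.

Lemma dual_add f g : dual_mem X f -> dual_mem X g -> dual_mem X (fadd f g).
Proof.
  intros [[Hf1 Hf2] [C1 H1]] [[Hg1 Hg2] [C2 H2]]. split. split.
  - intros x y. unfold fadd. rewrite Hf1, Hg1. ring.
  - intros a x. unfold fadd. rewrite Hf2, Hg2. ring.
  - exists (C1 + C2). intros x. unfold fadd. eapply Rle_trans. apply Rabs_triang.
    pose proof (H1 x). pose proof (H2 x). lra.
Qed.

Lemma dual_scal a f : dual_mem X f -> dual_mem X (fscal a f).
Proof.
  intros [[Hf1 Hf2] [C1 H1]]. split. split.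
  - intros x y. unfold fscal. rewrite Hf1. ring.
  - intros b x. unfold fscal. rewrite Hf2. ring.
  - exists (Rabs a * C1). intros x. unfold fscal. rewrite Rabs_mult, Rmult_assoc.
    apply Rmult_le_compat_l. apply Rabs_pos. auto.
Qed.

Lemma dual_lincomb c l : Forall (dual_mem X) l -> dual_mem X (lincomb fadd fscal fzero c l).
Proof.
  revert c. induction l as [|f l IH]; intros c Hl.
  - destruct c; apply dual_zero.
  - destruct c as [|a c]. apply dual_zero. inversion Hl; subst.
    change (dual_mem X (fadd (fscal a f) (lincomb fadd fscal fzero c l))).
    apply dual_add. apply dual_scal; auto. apply IH; auto.
Qed.

Lemma tensor_lc (u : Y) c l x :
  lincomb (@op_add X Y) (@op_scal X Y) (@op_zero X Y) c (map (fun f => tensor_op ((f,u)::nil)) l) x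
  = bscal (lincomb fadd fscal fzero c l x) u.
Proof.
  revert c. induction l as [|f l IH]; intros c.
  - destruct c; simpl; unfold op_zero, fzero; rewrite scal0; reflexivity.
  - destruct c as [|a c]. simpl; unfold op_zero, fzero; rewrite scal0; reflexivity.
    change (badd (bscal a (tensor_op ((f,u)::nil) x))
      (lincomb (@op_add X Y) (@op_scal X Y) (@op_zero X Y) c (map (fun f => tensor_op ((f,u)::nil)) l) x)
      = bscal (a * f x + lincomb fadd fscal fzero c l x) u).
    rewrite IH. unfold tensor_op. simpl. rewrite badd_zero, bscal_assoc, scal_add_same. reflexivity.
Qed.

Lemma lincomb_zeros n l x : lincomb (@fadd X) (@fscal X) (@fzero X) (repeat 0 n) l x = 0.
Proof.
  revert l. induction n; intros l. destruct l; reflexivity.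
  destruct l as [|f l]. reflexivity.
  change (0 * f x + lincomb fadd fscal fzero (repeat 0 n) l x = 0). rewrite IHn. ring.
Qed.

Lemma lincomb_opp c l : lincomb (@fadd X) (@fscal X) (@fzero X) (map Ropp c) l =
  fscal (-1) (lincomb fadd fscal fzero c l).
Proof.
  apply functional_extensionality. intros x. revert c. induction l as [|f l IH]; intros c.
  - destruct c; unfold lincomb, fscal, fzero; simpl; ring.
  - destruct c as [|a c]. unfold lincomb, fscal, fzero; simpl; ring.
    change (- a * f x + lincomb fadd fscal fzero (map Ropp c) l x = fscal (-1) (fadd (fscal a f) (lincomb fadd fscal fzero c l)) x).
    rewrite IH. unfold fscal, fadd. ring.
Qed.

Lemma BL_obdd (T : X -> Y) : BL X Y T -> obdd X Y bnorm T.
Proof.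
  intros [_ [C HC]]. exists (Rabs C). intros x Hx. eapply Rle_trans. apply HC. apply bound_ball; auto.
Qed.

Lemma comp_dual (T : X -> Y) (phi : Y -> R) : BL X Y T ->
  (forall x y, phi (badd x y) = phi x + phi y) -> (forall a x, phi (bscal a x) = a * phi x) ->
  (forall y, Rabs (phi y) <= bnorm y) -> dual_mem X (fun x => phi (T x)).
Proof.
  intros [[HT1 HT2] [C HC]] H1 H2 H3. split. split.
  - intros x y. rewrite HT1, H1. reflexivity.
  - intros a x. rewrite HT2, H2. reflexivity.
  - exists C. intros x. eapply Rle_trans. apply H3. apply HC.
Qed.

Lemma op_norm_tensor (S : X -> Y) (F : X -> R) (u : Y) : bnorm u = 1 ->
  (forall x, S x = bscal (F x) u) -> op_norm S = fnorm F.
Proof.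
  intros Hu HS. unfold op_norm, fnorm, opnorm. f_equal.
  apply functional_extensionality. intros t. apply propositional_extensionality.
  split; intros [x [Hx ->]]; exists x; split; auto; rewrite HS, bnorm_scal, Hu; ring.
Qed.
End Aux.

Lemma key (X Y : Banach) (F : X -> R) (S T : X -> Y) (u : Y) (phi : Y -> R) (d1 delta0 t0 e' N : R) :
  BL X Y T -> op_norm T = 1 ->
  (forall x y, phi (badd x y) = phi x + phi y) -> (forall a x, phi (bscal a x) = a * phi x) ->
  (forall y, Rabs (phi y) <= bnorm y) -> phi u = 1 -> bnorm u = 1 -> 0 <= d1 ->
  (forall h, 0 < bnorm h < delta0 -> bnorm (badd u h) + bnorm (badd u (bopp h)) - 2 <= d1 * bnorm h) ->
  dual_mem X F -> N = fnorm F -> 0 < N -> 0 < t0 <= 1/2 -> 2 * t0 < delta0 -> 0 < e' <= 1/6 ->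
  (forall x, S x = bscal (F x) u) ->
  op_norm (op_add S (op_scal (t0 * N) T)) >= (1 - e') * (op_norm S + Rabs (t0 * N)) ->
  fnorm (fadd F (fscal (t0 * N) (fun x => phi (T x)))) >= N + t0 * N - N * (3 * e' + t0 * d1).
Proof.
  intros HBL HTn Hp1 Hp2 Hp3 Hpu Hu Hd1 Hsm HF HN HNp Ht0 Htd He HS Hoc.
  set (lam := t0 * N) in *.
  assert (Hlam : 0 < lam) by (unfold lam; nra).
  assert (HlamN : lam <= N / 2) by (unfold lam; nra).
  rewrite (op_norm_tensor X Y S F u Hu HS), <- HN, Rabs_pos_eq in Hoc by lra.
  set (W := op_add S (op_scal lam T)).
  destruct HBL as [[HT1 HT2] [C HC]].
  pose proof (dual_fbdd X F HF) as HFb.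
  assert (HWb : obdd X Y bnorm W).
  { destruct HFb as [M HM]. exists (M + lam * Rabs C). intros x Hx. unfold W, op_add, op_scal.
    rewrite HS. eapply Rle_trans. apply bnorm_triangle. rewrite !bnorm_scal, Hu, (Rabs_pos_eq lam) by lra.
    pose proof (HM x Hx). pose proof (HC x). pose proof (bound_ball X C x Hx). nra. }
  destruct (opnorm_approx X Y bnorm W (e' * N) HWb ltac:(nra)) as [x [Hx Hwx]].
  fold (op_norm W) in Hwx.
  assert (HTb : obdd X Y bnorm T).
  { exists (Rabs C). intros z Hz. eapply Rle_trans. apply HC. apply bound_ball; auto. }
  set (a := F x). set (v := T x).
  assert (Ha : Rabs a <= N) by (rewrite HN; apply fnorm_ub; auto).
  assert (Hv : bnorm v <= 1) by (rewrite <- HTn; apply (opnorm_ub X Y bnorm T x HTb Hx)).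
  assert (HWx : W x = badd (bscal a u) (bscal lam v)) by (unfold W, op_add, op_scal; rewrite HS; reflexivity).
  rewrite HWx in Hwx.
  assert (Hup : bnorm (badd (bscal a u) (bscal lam v)) <= Rabs a + lam).
  { eapply Rle_trans. apply bnorm_triangle. rewrite !bnorm_scal, Hu, (Rabs_pos_eq lam) by lra. nra. }
  pose proof (norm_ge0 Y v).
  assert (E1 : e' * N <= 1/6 * N) by (apply Rmult_le_compat_r; lra).
  assert (E2 : e' * lam <= 1/6 * lam) by (apply Rmult_le_compat_r; lra).
  change (op_norm W >= (1 - e') * (N + lam)) in Hoc.
  assert (Haa : N / 2 <= Rabs a) by nra.
  assert (Hest : Rabs (a + lam * phi v) >= bnorm (badd (bscal a u) (bscal lam v)) - lam * d1).
  { destruct (Rle_dec 0 a) as [Hap|Han].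
    - rewrite Rabs_pos_eq in Haa by lra.
      assert (lam / a < delta0).
      { apply Rmult_lt_reg_r with a. lra. unfold Rdiv. rewrite Rmult_assoc, Rinv_l by lra. unfold lam. assert (0 < (delta0 - 2*t0) * a) by (apply Rmult_lt_0_compat; lra). assert (0 <= 2*t0 * (a - N/2)) by (apply Rmult_le_pos; lra). nra. }
      pose proof (smooth_est Y u phi d1 delta0 Hp1 Hp2 Hp3 Hpu Hu Hd1 Hsm a lam v ltac:(lra) ltac:(lra) H0 Hv).
      pose proof (Rle_abs (a + lam * phi v)). lra.
    - rewrite Rabs_left in Haa by lra.
      assert (lam / (-a) < delta0).
      { apply Rmult_lt_reg_r with (-a). lra. unfold Rdiv. rewrite Rmult_assoc, Rinv_l by lra. unfold lam. assert (0 < (delta0 - 2*t0) * (-a)) by (apply Rmult_lt_0_compat; lra). assert (0 <= 2*t0 * (-a - N/2)) by (apply Rmult_le_pos; lra). nra. }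
      assert (bnorm (bopp v) <= 1) by (rewrite norm_opp; auto).
      pose proof (smooth_est Y u phi d1 delta0 Hp1 Hp2 Hp3 Hpu Hu Hd1 Hsm (-a) lam (bopp v) ltac:(lra) ltac:(lra) H0 H1).
      assert (badd (bscal (-a) u) (bscal lam (bopp v)) = bopp (badd (bscal a u) (bscal lam v))).
      { rewrite !opp_scal, bscal_addr, !bscal_assoc. f_equal; f_equal; ring. }
      rewrite H3, norm_opp in H2. rewrite opp_scal, Hp2 in H2.
      pose proof (Rle_abs (- (a + lam * phi v))). rewrite Rabs_Ropp in H4. lra. }
  assert (Hg : dual_mem X (fun x => phi (T x))).
  { apply comp_dual; auto. split. split; auto. exists C; auto. }
  pose proof (fnorm_ub X (fadd F (fscal lam (fun x => phi (T x)))) x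
     (dual_fbdd X _ (dual_add X _ _ HF (dual_scal X lam _ Hg))) Hx).
  change (Rabs (a + lam * phi v) <= fnorm (fadd F (fscal lam (fun x => phi (T x))))) in H0.
  assert (e' * lam <= e' * N) by nra.
  assert (lam * d1 = N * (t0 * d1)) by (unfold lam; ring).
  lra.
Qed.

Lemma fnorm_scal_eq (X : Banach) a f : fbdd X f -> fnorm (fscal a f) = Rabs a * fnorm f.
Proof.
  intros Hf. apply Rle_antisym. apply fnorm_scal; auto.
  destruct (Req_dec a 0) as [->|Ha].
  - rewrite Rabs_R0, Rmult_0_l. apply fnorm_ge0. apply fbdd_scal; auto.
  - assert (f = fscal (/a) (fscal a f)). { apply functional_extensionality. intros x. unfold fscal. field. auto. }
    pose proof (fnorm_scal X (/a) (fscal a f) (fbdd_scal X a f Hf)). rewrite <- H in H0.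
    rewrite Rabs_inv in H0. assert (0 < Rabs a) by (apply Rabs_pos_lt; auto).
    apply (Rmult_le_compat_l (Rabs a)) in H0; [|lra]. rewrite <- Rmult_assoc, Rinv_r in H0; lra.
Qed.

Theorem mainTheorem13 (X Y : Banach) (H : (X -> Y) -> Prop) :
  closed_subspace_L X Y H ->
  tensor_in X Y H ->
  octahedral H (@op_add X Y) (@op_scal X Y) (@op_zero X Y) (@op_norm X Y) ->
  non_rough Y ->
  octahedral (dual_mem X) (@fadd X) (@fscal X) (@fzero X) (@fnorm X).
Proof.
  intros HHc Htin Hoct Hnr l Hl eps Heps.
  destruct HHc as [HBL _].
  set (e := Rmin eps (1/2)).
  assert (He : 0 < e /\ e <= eps /\ e <= 1/2).
  { unfold e. split; [apply Rmin_glb_lt; lra | split; [apply Rmin_l | apply Rmin_r]]. }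
  assert (Hf0 : exists f0, dual_mem X f0 /\ 0 < fnorm f0).
  { destruct (Hoct nil (Forall_nil _) (1/2) ltac:(lra)) as [T0 [HT0 [HT0n _]]].
    pose proof (HBL T0 HT0) as HB0.
    destruct (opnorm_approx X Y bnorm T0 (1/2) (BL_obdd X Y T0 HB0) ltac:(lra)) as [x0 [Hx0 Hx0']].
    fold (op_norm T0) in Hx0'. rewrite HT0n in Hx0'.
    set (y0 := T0 x0) in *.
    set (u0 := bscal (/ bnorm y0) y0).
    assert (Hu0 : bnorm u0 = 1).
    { unfold u0. rewrite bnorm_scal, Rabs_pos_eq. field. lra. left; apply Rinv_0_lt_compat; lra. }
    destruct (HB_exists Y u0 Hu0) as [phi0 [Hp1 [Hp2 [Hp3 Hp4]]]].
    exists (fun x => phi0 (T0 x)).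
    assert (Hd : dual_mem X (fun x => phi0 (T0 x))) by (apply comp_dual; auto).
    split; auto.
    eapply Rlt_le_trans. 2: apply (fnorm_ub X _ x0 (dual_fbdd X _ Hd) Hx0).
    assert (E : y0 = bscal (bnorm y0) u0).
    { unfold u0. rewrite bscal_assoc, Rinv_r, bscal_one. reflexivity. lra. }
    change (0 < Rabs (phi0 y0)). rewrite E, Hp2, Hp4. rewrite Rabs_pos_eq; lra. }
  destruct Hf0 as [f0 [Hf0d Hf0n]].
  destruct (smooth_point Y Hnr (e/4) ltac:(lra)) as [u [Hu [delta0 [Hdel Hsm]]]].
  destruct (HB_exists Y u Hu) as [phi [Hp1 [Hp2 [Hp3 Hpu]]]].
  set (t0 := Rmin (1/2) (delta0/4)).
  assert (Ht0 : 0 < t0 <= 1/2 /\ 2 * t0 < delta0).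
  { unfold t0. split. split. apply Rmin_glb_lt; lra. apply Rmin_l. pose proof (Rmin_r (1/2) (delta0/4)). lra. }
  set (e' := Rmin (1/6) (t0 * e / 12)).
  assert (He' : 0 < e' <= 1/6 /\ e' <= t0 * e / 12).
  { unfold e'. split. split. apply Rmin_glb_lt. lra. apply Rmult_lt_0_compat; [|lra]. apply Rmult_lt_0_compat; lra.
    apply Rmin_l. apply Rmin_r. }
  set (l' := f0 :: l).
  assert (Hl' : Forall (dual_mem X) l') by (constructor; auto).
  set (L' := map (fun f => tensor_op ((f,u)::nil)) l').
  assert (HL' : Forall H L').
  { unfold L'. apply Forall_map. eapply Forall_impl. 2: exact Hl'. intros f Hf. apply Htin.
    constructor; auto. }
  destruct (Hoct L' HL' e' ltac:(lra)) as [T [HT [HTn HTo]]].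
  pose proof (HBL T HT) as HTB.
  set (g := fun x => phi (T x)).
  assert (Hg : dual_mem X g) by (unfold g; apply (comp_dual X Y T phi); auto).
  assert (Hgb : fbdd X g) by (apply dual_fbdd; auto).
  assert (Hgle : fnorm g <= 1).
  { apply fnorm_le. intros x Hx. eapply Rle_trans. apply Hp3. rewrite <- HTn.
    apply (opnorm_ub X Y bnorm T x (BL_obdd X Y T HTB) Hx). }
  assert (Hkey : forall c', length c' = length l' -> 0 < fnorm (lincomb fadd fscal fzero c' l') ->
     fnorm (fadd (lincomb fadd fscal fzero c' l') (fscal (t0 * fnorm (lincomb fadd fscal fzero c' l')) g)) >=
     fnorm (lincomb fadd fscal fzero c' l') + t0 * fnorm (lincomb fadd fscal fzero c' l')
       - fnorm (lincomb fadd fscal fzero c' l') * (3 * e' + t0 * (e/4))).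
  { intros c' Hc' HN.
    apply (key X Y _ (lincomb op_add op_scal op_zero c' L') T u phi (e/4) delta0 t0 e' _ HTB HTn
      Hp1 Hp2 Hp3 Hpu Hu ltac:(lra) Hsm (dual_lincomb X c' l' Hl') eq_refl HN (proj1 Ht0) (proj2 Ht0) (proj1 He')).
    - intros x. unfold L'. apply tensor_lc.
    - assert (Hlen : length c' = length L') by (unfold L'; rewrite length_map; auto).
      pose proof (HTo c' (t0 * fnorm (lincomb fadd fscal fzero c' l')) Hlen) as HH. simpl in HH. exact HH. }
  set (gam := fnorm g) in *.
  assert (Hgam : 1 - e/2 <= gam).
  { set (c0 := 1 :: repeat 0 (length l)).
    assert (Hc0 : length c0 = length l') by (unfold c0, l'; simpl; rewrite repeat_length; auto).
    assert (EF : lincomb fadd fscal fzero c0 l' = f0).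
    { apply functional_extensionality. intros x. unfold c0, l'.
      change (1 * f0 x + lincomb fadd fscal fzero (repeat 0 (length l)) l x = f0 x).
      rewrite lincomb_zeros. ring. }
    pose proof (Hkey c0 Hc0). rewrite EF in H0. specialize (H0 Hf0n).
    set (N0 := fnorm f0) in *.
    pose proof (fnorm_add X f0 (fscal (t0 * N0) g) (dual_fbdd X _ Hf0d) (fbdd_scal X _ _ Hgb)).
    pose proof (fnorm_scal X (t0 * N0) g Hgb). rewrite Rabs_pos_eq in H2 by (destruct Ht0; nra).
    fold gam in H2.
    assert (N0 * (3*e' + t0*(e/4)) <= N0 * (t0 * (e/2))) by (apply Rmult_le_compat_l; lra).
    assert (t0 * N0 * (1 - e/2) <= t0 * N0 * gam) by (fold N0 in H1; lra).
    apply Rmult_le_reg_l with (t0 * N0). destruct Ht0; nra. lra. }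
  assert (Hgpos : 0 < gam) by lra.
  set (g' := fscal (/ gam) g).
  assert (Hg' : dual_mem X g') by (apply dual_scal; auto).
  assert (Hg'b : fbdd X g') by (apply dual_fbdd; auto).
  assert (Hg'n : fnorm g' = 1).
  { unfold g'. rewrite fnorm_scal_eq; auto. fold gam. rewrite Rabs_pos_eq. field. lra. left. apply Rinv_0_lt_compat; lra. }
  assert (Hkey2 : forall c, length c = length l -> 0 < fnorm (lincomb fadd fscal fzero c l) ->
     fnorm (fadd (lincomb fadd fscal fzero c l) (fscal (t0 * fnorm (lincomb fadd fscal fzero c l)) g')) >=
     fnorm (lincomb fadd fscal fzero c l) + t0 * fnorm (lincomb fadd fscal fzero c l)
       - t0 * fnorm (lincomb fadd fscal fzero c l) * e).
  { intros c Hc HN.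
    set (F := lincomb fadd fscal fzero c l) in *.
    assert (Hlen : length (0 :: c) = length l') by (unfold l'; simpl; auto).
    assert (EF : lincomb fadd fscal fzero (0 :: c) l' = F).
    { apply functional_extensionality. intros x. unfold l'.
      change (0 * f0 x + F x = F x). ring. }
    pose proof (Hkey (0 :: c) Hlen). rewrite EF in H0. specialize (H0 HN).
    set (N := fnorm F) in *.
    set (lam := t0 * N) in *.
    assert (HFb : fbdd X F) by (apply dual_fbdd, dual_lincomb; auto).
    assert (E2 : fadd F (fscal lam g) = fadd (fadd F (fscal lam g')) (fscal (lam * (gam - 1)) g')).
    { apply functional_extensionality. intros x. unfold fadd, fscal, g'. unfold fscal. field. lra. }
    rewrite E2 in H0.
    pose proof (fnorm_add X (fadd F (fscal lam g')) (fscal (lam * (gam - 1)) g') (fbdd_add X _ _ HFb (fbdd_scal X _ _ Hg'b)) (fbdd_scal X _ _ Hg'b)).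
    rewrite fnorm_scal_eq, Hg'n in H1 by auto.
    assert (Hlam : 0 < lam) by (unfold lam; destruct Ht0; nra).
    assert (Rabs (lam * (gam - 1)) <= lam * (e/2)).
    { rewrite Rabs_mult, Rabs_pos_eq by lra. apply Rmult_le_compat_l. lra. apply Rabs_le. lra. }
    assert (N * (3*e' + t0*(e/4)) <= N * (t0 * (e/2))) by (apply Rmult_le_compat_l; lra).
    assert (lam * (e/2) = t0 * N * (e/2)) by (unfold lam; ring).
    assert (N * (t0 * (e / 2)) = t0 * N * (e/2)) by ring.
    assert (t0 * N * e = t0 * N * (e/2) + t0 * N * (e/2)) by field.
    lra. }
  exists g'. split; auto. split; auto.
  intros c lam Hc. cbv zeta.
  set (F := lincomb fadd fscal fzero c l).
  assert (HFd : dual_mem X F) by (apply dual_lincomb; auto).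
  assert (HFb : fbdd X F) by (apply dual_fbdd; auto).
  assert (HN0 : 0 <= fnorm F) by (apply fnorm_ge0; auto).
  assert (Hmain : fnorm (fadd F (fscal lam g')) >= (1 - e) * (fnorm F + Rabs lam)).
  { destruct (Req_dec (fnorm F) 0) as [HN|HN].
    - assert (E : fscal lam g' = fadd (fadd F (fscal lam g')) (fscal (-1) F)).
      { apply functional_extensionality. intros x. unfold fadd, fscal. ring. }
      pose proof (fnorm_add X (fadd F (fscal lam g')) (fscal (-1) F) (fbdd_add X _ _ HFb (fbdd_scal X _ _ Hg'b)) (fbdd_scal X _ _ HFb)).
      rewrite <- E, fnorm_scal_eq, Hg'n, fnorm_opp, HN in H0 by auto.
      rewrite HN. pose proof (Rabs_pos lam). nra.
    - assert (HNp : 0 < fnorm F) by lra.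
      destruct (Rle_dec 0 lam) as [Hl0|Hl0].
      + rewrite Rabs_pos_eq by lra.
        apply (conv_step X F g' (fnorm F) t0 e lam HFb Hg'b Hg'n eq_refl ltac:(lra) HNp ltac:(lra)); auto.
        apply Hkey2; auto.
      + rewrite Rabs_left by lra.
        set (F' := lincomb fadd fscal fzero (map Ropp c) l).
        assert (EF' : F' = fscal (-1) F) by (apply lincomb_opp).
        assert (HF'b : fbdd X F') by (rewrite EF'; apply fbdd_scal; auto).
        assert (HN' : fnorm F' = fnorm F) by (rewrite EF'; apply fnorm_opp; auto).
        assert (Hc' : length (map Ropp c) = length l) by (rewrite length_map; auto).
        pose proof (Hkey2 (map Ropp c) Hc'). fold F' in H0. rewrite HN' in H0. specialize (H0 HNp).
        pose proof (conv_step X F' g' (fnorm F) t0 e (- lam) HF'b Hg'b Hg'n (eq_sym HN') ltac:(lra) HNp ltac:(lra) H0 ltac:(lra)).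
        assert (E : fadd F' (fscal (- lam) g') = fscal (-1) (fadd F (fscal lam g'))).
        { rewrite EF'. apply functional_extensionality. intros x. unfold fadd, fscal. ring. }
        rewrite E, fnorm_opp in H1. exact H1.
        apply fbdd_add; auto. apply fbdd_scal; auto. }
  assert (0 <= fnorm F + Rabs lam) by (pose proof (Rabs_pos lam); lra).
  assert ((1 - eps) * (fnorm F + Rabs lam) <= (1 - e) * (fnorm F + Rabs lam)) by (apply Rmult_le_compat_r; lra).
  lra.
Qed.
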